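(* Let $m\ge 2$. Consider the operators $\underline{D}$ and $-\frac{1}{r}\,\partial_{\underline{\omega}}+(m-1)\frac{1}{r}\,\underline{\omega}$ acting (by left action) on smooth $\mathbb{R}_{0,m}$-valued functions on $\mathbb{R}^m\setminus\{0\}$. Both operators are cartesian operators, i.e. each of them can be expressed using only the cartesian partial derivatives $\partial_{x_1},\dots,\partial_{x_m}$ together with (left) multiplication and division by analytic (polynomial) functions of $\underline{x}$.
   Context: $\mathbb{R}_{0,m}$ is the real Clifford algebra generated by an orthonormal basis $e_1,\dots,e_m$ of $\mathbb{R}^m$ with $e_j^2=-1$ and $e_ie_j=-e_je_i$ for $i\ne j$. A point of $\mathbb{R}^m$ is identified with the 1-vector $\underline{x}=\sum_j e_jx_j$, so $\underline{x}^2=-|\underline{x}|^2$; $r=|\underline{x}|$ and $\underline{\omega}=\underline{x}/r\in S^{m-1}$. Division by $\underline{x}$ means left multiplication by $\frac{1}{\underline{x}}=-\underline{x}/|\underline{x}|^2$. The Dirac operator is $\underline{\partial}=\sum_j e_j\partial_{x_j}$; in spherical coordinates $\underline{\partial}=\underline{\omega}\,\partial_r+\frac{1}{r}\partial_{\underline{\omega}}$, which defines the angular Dirac operator $\partial_{\underline{\omega}}:=r(\underline{\partial}-\underline{\omega}\,\partial_r)$. The signum-Dirac operator is $\underline{D}f:=\underline{\omega}\,\underline{\partial}(-\underline{\omega}\,f)$. The Euler operator is $\mathbb{E}=\sum_j x_j\partial_{x_j}$ and the angular momentum operator is $\Gamma=-\sum_{j<k}e_je_k(x_j\partial_{x_k}-x_k\partial_{x_j})$.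 An operator is called cartesian if it involves only partial derivatives with respect to the cartesian coordinates and multiplication and division by analytic functions. *)

(* Defs.v *)
From HB Require Import structures.
From mathcomp Require Import all_boot all_order all_algebra.
From mathcomp Require Import all_classical all_reals all_analysis.
Set Implicit Arguments. Unset Strict Implicit. Unset Printing Implicit Defensive.
Import Order.TTheory GRing.Theory Num.Theory.
Import numFieldNormedType.Exports.
Local Open Scope ring_scope.

Section Clifford.
Variables (R : realType) (m : nat).

(* The real Clifford algebra R_{0,m}: an element is the family of its
   coordinates on the basis blades e_A = e_{a1}...e_{ak}, a1 < ... < ak,
   A a subset of {0,...,m-1}. *)
Definition Cl := {ffun {set 'I_m} -> R}.

(* sign of e_A e_B = sgn A B * e_{A Δ B}, with e_j^2 = -1 *)
Definition clsgn (A B : {set 'I_m}) : R :=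
  (-1) ^+ (#|[set p : 'I_m * 'I_m | (p.1 \in A) && (p.2 \in B) && (p.2 < p.1)%N]|
           + #|A :&: B|).

Definition clmul (a b : Cl) : Cl :=
  [ffun C => \sum_(A : {set 'I_m}) \sum_(B : {set 'I_m} | (A :\: B) :|: (B :\: A) == C)
              clsgn A B * a A * b B].

Definition clscal (s : R) : Cl := [ffun A => if A == finset.set0 then s else 0].
Definition clvec1 (j : 'I_m) : Cl := [ffun A => if A == [set j] then 1 else 0].

Notation pt := 'rV[R]_m.

Definition vecx (x : pt) : Cl := \sum_(j < m) x 0 j *: clvec1 j.
Definition rad (x : pt) : R := Num.sqrt (\sum_(j < m) x 0 j ^+ 2).
Definition omegapt (x : pt) : pt := (rad x)^-1 *: x.
Definition omega (x : pt) : Cl := (rad x)^-1 *: vecx x.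

Definition ept (j : 'I_m) : pt := \row_(k < m) (if k == j then 1 else 0).

(* Clifford-valued functions (on R^m; only values on R^m \ {0} matter) *)
Definition CF := pt -> Cl.
Definition Op := CF -> CF.

Definition pdC (j : 'I_m) (F : CF) : CF :=
  fun x => [ffun A => derive (fun y => F y A) x (ept j)].

Definition pdr (F : CF) : CF :=
  fun x => [ffun A => derive (fun y => F y A) x (omegapt x)].

Definition dirac (F : CF) : CF := fun x => \sum_(j < m) clmul (clvec1 j) (pdC j F x).

Definition angdirac (F : CF) : CF :=
  fun x => rad x *: (dirac F x - clmul (omega x) (pdr F x)).

Definition sdirac (F : CF) : CF :=
  fun x => clmul (omega x) (dirac (fun y => - clmul (omega y) (F y)) x).

Definition opB (F : CF) : CF :=
  fun x => - ((rad x)^-1 *: angdirac F x)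
           + ((m.-1)%:R / rad x) *: clmul (omega x) (F x).

Definition iterpd (s : seq 'I_m) (F : CF) : CF := foldr pdC F s.
Definition smooth (F : CF) : Prop :=
  forall (s : seq 'I_m) (A : {set 'I_m}) (x : pt), x != 0 ->
    differentiable (fun y => iterpd s F y A) x.

Inductive polyfun : CF -> Prop :=
  | pf_const (c : Cl) : polyfun (fun _ => c)
  | pf_coord (j : 'I_m) : polyfun (fun x => clscal (x 0 j))
  | pf_add (g h : CF) : polyfun g -> polyfun h -> polyfun (fun x => g x + h x)
  | pf_mul (g h : CF) : polyfun g -> polyfun h -> polyfun (fun x => clmul (g x) (h x)).

(* cartesian operators: generated by the cartesian partial derivatives,
   left multiplication and left division by polynomial functions of x
   (division by g = left multiplication by the pointwise inverse of g, where
   g(x) is invertible for x <> 0), sums and compositions. *)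
Inductive cartesian : Op -> Prop :=
  | cart_id : cartesian (fun F => F)
  | cart_pd (j : 'I_m) : cartesian (pdC j)
  | cart_mul (g : CF) : polyfun g -> cartesian (fun F x => clmul (g x) (F x))
  | cart_div (g h : CF) : polyfun g ->
      (forall x : pt, x != 0 ->
         clmul (g x) (h x) = clscal 1 /\ clmul (h x) (g x) = clscal 1) ->
      cartesian (fun F x => clmul (h x) (F x))
  | cart_add (P Q : Op) : cartesian P -> cartesian Q -> cartesian (fun F x => P F x + Q F x)
  | cart_comp (P Q : Op) : cartesian P -> cartesian Q -> cartesian (fun F => P (Q F)).

Definition is_cartesian (P : Op) : Prop :=
  exists Q : Op, cartesian Q /\
    forall F : CF, smooth F -> forall x : pt, x != 0 -> P F x = Q F x.

End Clifford.

(* Main.v *)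
Require Import Defs.
From mathcomp Require Import all_boot all_order all_algebra.
From mathcomp Require Import all_classical all_reals all_analysis.
From HB Require Import structures.
From mathcomp Require Import ring lra.
Set Implicit Arguments. Unset Strict Implicit. Unset Printing Implicit Defensive.
Import Order.TTheory GRing.Theory Num.Theory.
Import numFieldNormedType.Exports.
Local Open Scope ring_scope.

Section Cl.
Variables (R : realType) (m : nat).
Local Notation Cl := (Cl R m).

Lemma clmul_linl (k : R) (a a' b : Cl) :
  clmul (k *: a + a') b = k *: clmul a b + clmul a' b.
Proof.
apply/ffunP => C; rewrite !ffunE scaler_sumr -big_split /=.
apply: eq_bigr => A _; rewrite scaler_sumr -big_split /=.
apply: eq_bigr => B _; rewrite !ffunE /= /GRing.scale /=; ring.
Qed.

Lemma clmul_linr (k : R) (a b b' : Cl) :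
  clmul a (k *: b + b') = k *: clmul a b + clmul a b'.
Proof.
apply/ffunP => C; rewrite !ffunE scaler_sumr -big_split /=.
apply: eq_bigr => A _; rewrite scaler_sumr -big_split /=.
apply: eq_bigr => B _; rewrite !ffunE /= /GRing.scale /=; ring.
Qed.

Lemma clmul0l (b : Cl) : clmul 0 b = 0.
Proof. by apply/ffunP => C; rewrite !ffunE big1 // => A _; rewrite big1 // => B _; rewrite ffunE; ring. Qed.

Lemma clmul0r (a : Cl) : clmul a 0 = 0.
Proof. by apply/ffunP => C; rewrite !ffunE big1 // => A _; rewrite big1 // => B _; rewrite ffunE; ring. Qed.

Lemma clmulZl k (a b : Cl) : clmul (k *: a) b = k *: clmul a b.
Proof. by rewrite -[k *: a]addr0 clmul_linl clmul0l addr0. Qed.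
Lemma clmulZr k (a b : Cl) : clmul a (k *: b) = k *: clmul a b.
Proof. by rewrite -[k *: b]addr0 clmul_linr clmul0r addr0. Qed.
Lemma clmulDl (a a' b : Cl) : clmul (a + a') b = clmul a b + clmul a' b.
Proof. by rewrite -[a]scale1r clmul_linl !scale1r. Qed.
Lemma clmulDr (a b b' : Cl) : clmul a (b + b') = clmul a b + clmul a b'.
Proof. by rewrite -[b]scale1r clmul_linr !scale1r. Qed.
Lemma clmulNl (a b : Cl) : clmul (- a) b = - clmul a b.
Proof. by rewrite -scaleN1r clmulZl scaleN1r. Qed.
Lemma clmulNr (a b : Cl) : clmul a (- b) = - clmul a b.
Proof. by rewrite -scaleN1r clmulZr scaleN1r. Qed.

Lemma clmul_suml (I : Type) (s : seq I) (f : I -> Cl) b :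
  clmul (\sum_(i <- s) f i) b = \sum_(i <- s) clmul (f i) b.
Proof.
elim: s => [|i s IH]; first by rewrite !big_nil clmul0l.
by rewrite !big_cons clmulDl IH.
Qed.

Lemma clmul_sumr (I : Type) (s : seq I) (f : I -> Cl) a :
  clmul a (\sum_(i <- s) f i) = \sum_(i <- s) clmul a (f i).
Proof.
elim: s => [|i s IH]; first by rewrite !big_nil clmul0r.
by rewrite !big_cons clmulDr IH.
Qed.

Lemma clsgn0 (B : {set 'I_m}) : clsgn R (finset.set0 : {set 'I_m}) B = 1.
Proof.
rewrite /clsgn finset.set0I cards0 addn0.
rewrite (_ : [set p : 'I_m * 'I_m | _] = finset.set0) ?cards0 ?expr0 //.
by apply/setP => p; rewrite !inE.
Qed.

Lemma clmul_scall (c : R) (b : Cl) : clmul (clscal m c) b = c *: b.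
Proof.
apply/ffunP => C; rewrite !ffunE (bigD1 finset.set0) //=.
rewrite [X in _ + X]big1 ?addr0; last first.
  by move=> A /negbTE HA; rewrite big1 // => B _; rewrite ffunE HA; ring.
rewrite (big_pred1 C); last first.
  by move=> B /=; rewrite finset.setD0 finset.set0D finset.set0U.
by rewrite ffunE eqxx clsgn0 mul1r.
Qed.

Lemma clscalM (a b : R) : clmul (clscal m a) (clscal m b) = clscal m (a * b).
Proof.
rewrite clmul_scall; apply/ffunP => C; rewrite !ffunE.
by case: ifP => _; rewrite ?scaler0.
Qed.

End Cl.

Section Cart.
Variables (R : realType) (m : nat).
Local Notation Cl := (Cl R m).
Local Notation pt := 'rV[R]_m.
Local Notation CF := (CF R m).
Local Notation Op := (Op R m).

Definition Ssq (x : pt) : R := \sum_(j < m) x 0 j ^+ 2.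

Lemma polyfun_ext (g h : CF) : polyfun g -> (forall x, g x = h x) -> polyfun h.
Proof. by move=> pg e; have <- : g = h by apply/funext. Qed.

Lemma cart_ext (P Q : Op) : cartesian P -> (forall F x, P F x = Q F x) -> cartesian Q.
Proof.
move=> cP e; have <- // : P = Q.
by apply/funext => F; apply/funext => x.
Qed.

Lemma polyfun_sum (I : Type) (s : seq I) (f : I -> CF) :
  (forall i, polyfun (f i)) -> polyfun (fun x => \sum_(i <- s) f i x).
Proof.
move=> pf; elim: s => [|i s IH].
  by apply: (polyfun_ext (pf_const 0)) => x; rewrite big_nil.
by apply: (polyfun_ext (pf_add (pf i) IH)) => x; rewrite big_cons.
Qed.

Lemma cart_sum (I : Type) (s : seq I) (P : I -> Op) :
  (forall i, cartesian (P i)) -> cartesian (fun F x => \sum_(i <- s) P i F x).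
Proof.
move=> cP; elim: s => [|i s IH].
  apply: (cart_ext (cart_mul (pf_const (0 : Cl)))) => F x.
  by rewrite big_nil clmul0l.
by apply: (cart_ext (cart_add (cP i) IH)) => F x; rewrite big_cons.
Qed.

Lemma clscalD (a b : R) : clscal m (a + b) = clscal m a + clscal m b.
Proof. by apply/ffunP => C; rewrite !ffunE; case: ifP => _; rewrite ?addr0. Qed.

Lemma clscal_sum (I : Type) (s : seq I) (f : I -> R) :
  clscal m (\sum_(i <- s) f i) = \sum_(i <- s) clscal m (f i).
Proof.
elim: s => [|i s IH].
  by rewrite !big_nil; apply/ffunP => C; rewrite !ffunE; case: ifP.
by rewrite !big_cons clscalD IH.
Qed.

Lemma polyfun_S : polyfun (fun x => clscal m (Ssq x)).
Proof.
apply: (polyfun_ext (@polyfun_sum _ (index_enum 'I_m)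
   (fun j x => clmul (clscal m (x 0 j)) (clscal m (x 0 j)))
   (fun j => pf_mul (pf_coord R j) (pf_coord R j)))) => x.
by rewrite /Ssq clscal_sum; apply: eq_bigr => j _; rewrite clscalM expr2.
Qed.

Lemma polyfun_vecx : polyfun (@vecx R m).
Proof.
apply: (polyfun_ext (@polyfun_sum _ (index_enum 'I_m)
   (fun j x => clmul (clscal m (x 0 j)) (clvec1 R j))
   (fun j => pf_mul (pf_coord R j) (pf_const (clvec1 R j))))) => x.
by rewrite /vecx; apply: eq_bigr => j _; rewrite clmul_scall.
Qed.

Lemma cart_scal_poly (p : pt -> R) : polyfun (fun x => clscal m (p x)) ->
  cartesian (fun F x => p x *: F x).
Proof.
move=> pp; apply: (cart_ext (cart_mul pp)) => F x /=; exact: clmul_scall.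
Qed.

Lemma cart_scal_const (c : R) : cartesian (fun (F : CF) x => c *: F x).
Proof. exact: (@cart_scal_poly (fun _ => c) (pf_const _)). Qed.

Lemma cart_scal_inv (p : pt -> R) : polyfun (fun x => clscal m (p x)) ->
  (forall x, x != 0 -> p x != 0) ->
  cartesian (fun F x => (p x)^-1 *: F x).
Proof.
move=> pp nz.
have hd : forall x : pt, x != 0 ->
   clmul (clscal m (p x)) (clscal m (p x)^-1) = clscal m 1 /\
   clmul (clscal m (p x)^-1) (clscal m (p x)) = clscal m 1.
  by move=> x /nz px; rewrite !clscalM mulfV // mulVf.
apply: (cart_ext (@cart_div R m _ (fun x => clscal m (p x)^-1) pp hd)).
by move=> F x /=; exact: clmul_scall.
Qed.

Lemma cart_vecx : cartesian (fun (F : CF) x => clmul (vecx x) (F x)).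
Proof. exact: cart_mul polyfun_vecx. Qed.

Lemma cart_dirac : cartesian (@Defs.dirac R m).
Proof.
apply: (cart_ext (@cart_sum _ (index_enum 'I_m)
   (fun j F x => clmul (clvec1 R j) (pdC j F x))
   (fun j => cart_comp (cart_mul (pf_const (clvec1 R j))) (cart_pd R j)))) => F x.
by [].
Qed.

Lemma cart_euler : cartesian (fun (F : CF) (x : pt) => \sum_(j < m) (x 0 j) *: pdC j F x).
Proof.
apply: (cart_ext (@cart_sum _ (index_enum 'I_m)
   (fun j F x => (x 0 j) *: pdC j F x)
   (fun j => cart_comp (@cart_scal_poly (fun x => x 0 j) (pf_coord R j)) (cart_pd R j)))) => F x.
by [].
Qed.

Lemma Ssq_neq0 (x : pt) : x != 0 -> Ssq x != 0.
Proof.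
apply: contra => /eqP /psumr_eq0P H; apply/eqP/matrixP => i j.
have -> : i = 0 by rewrite (ord1 i).
rewrite mxE; apply/eqP; rewrite -sqrf_eq0; apply/eqP/H => // k _.
exact: sqr_ge0.
Qed.

Lemma Ssq_ge0 (x : pt) : 0 <= Ssq x.
Proof. by apply: sumr_ge0 => j _; exact: sqr_ge0. Qed.

Lemma rad_sqr (x : pt) : Defs.rad x ^+ 2 = Ssq x.
Proof. by rewrite /Defs.rad sqr_sqrtr // Ssq_ge0. Qed.

Lemma rad_neq0 (x : pt) : x != 0 -> Defs.rad x != 0.
Proof. by move=> /Ssq_neq0; apply: contra => /eqP r0; rewrite -rad_sqr r0 expr0n. Qed.

End Cart.

Section Ana.
Variables (R : realType) (m : nat).
Local Notation Cl := (Cl R m).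
Local Notation pt := 'rV[R]_m.
Local Notation CF := (CF R m).

Lemma coord_derive (k : 'I_m) (x v : pt) :
  'D_v (fun y : pt => y 0 k) x = v 0 k.
Proof.
have @f : {linear pt -> R}.
  by exists (fun N : pt => N 0 k); do 2![eexists]; do ?[constructor];
     rewrite ?mxE// => ? *; rewrite ?mxE//; move=> ?; rewrite !mxE.
rewrite (_ : (fun _ => _) = f) //.
rewrite deriveE; last exact/linear_differentiable/coord_continuous.
by rewrite diff_lin //; exact: coord_continuous.
Qed.

Lemma coord_diff (k : 'I_m) (x : pt) : differentiable (fun y : pt => y 0 k) x.
Proof. exact: differentiable_coord. Qed.

Lemma diff_big (I : finType) (P : pred I) (f : I -> pt -> R) (x : pt) :
  (forall i, differentiable (f i) x) ->
  differentiable (fun y => \sum_(i | P i) f i y) x.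
Proof.
move=> df; rewrite -fct_sumE.
elim/big_ind: _ => // g h dg dh; exact: differentiableD.
Qed.

Lemma Ssq_diff (x : pt) : differentiable (@Ssq R m) x.
Proof.
rewrite /Ssq; apply: diff_big => k.
by have := differentiableX 1 (coord_diff k x); rewrite exprfctE.
Qed.

Lemma Ssq_derive (x : pt) (j : 'I_m) :
  'D_(ept R j) (@Ssq R m) x = 2 * x 0 j.
Proof.
have dk : forall k, 'D_(ept R j) (fun y : pt => y 0 k ^+ 2) x = (2 * x 0 k) * (ept R j) 0 k.
  move=> k; have -> : (fun y : pt => y 0 k ^+ 2) = (fun y : pt => y 0 k) ^+ 2 by rewrite exprfctE.
  rewrite deriveX; last exact: diff_derivable (coord_diff _ _).
  by rewrite coord_derive /GRing.scale /= expr1.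
rewrite /Ssq -fct_sumE derive_sum; last first.
  by move=> k; apply: diff_derivable; have := differentiableX 1 (coord_diff k x); rewrite exprfctE.
rewrite (bigD1 j) //= big1 ?addr0.
  by rewrite dk mxE eqxx mulr1.
by move=> k kj; rewrite dk mxE (negbTE kj) mulr0.
Qed.

Lemma rad_diff (x : pt) : x != 0 -> differentiable (@Defs.rad R m) x.
Proof.
move=> x0.
have -> : @Defs.rad R m = Num.sqrt \o (@Ssq R m) by [].
apply: differentiable_comp; first exact: Ssq_diff.
apply/derivable1_diffP.
have Sp : 0 < Ssq x by rewrite lt_def Ssq_neq0 // Ssq_ge0.
by have [] := is_derive1_sqrt Sp.
Qed.

Lemma rad_derive (x : pt) (j : 'I_m) : x != 0 ->
  'D_(ept R j) (@Defs.rad R m) x = x 0 j / Defs.rad x.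
Proof.
move=> x0.
have dr : derivable (@Defs.rad R m) x (ept R j) by apply: diff_derivable; exact: rad_diff.
have := deriveX 2 dr.
have -> : (@Defs.rad R m) ^+ 2 = @Ssq R m.
  by rewrite exprfctE; apply/funext => y; rewrite rad_sqr.
rewrite Ssq_derive /= expr1 => H.
have r0 := rad_neq0 x0.
apply: (@mulfI _ (2 * Defs.rad x)); first by rewrite mulf_neq0 // pnatr_eq0.
transitivity (2 * x 0 j); first by rewrite H.
by field.
Qed.

End Ana.

Section SD.
Variables (R : realType) (m : nat).
Local Notation Cl := (Cl R m).
Local Notation pt := 'rV[R]_m.
Local Notation CF := (CF R m).

Lemma smooth_diff (F : CF) A x : smooth F -> x != 0 ->
  differentiable (fun y => F y A) x.
Proof. by move=> sF x0; exact: (sF [::] A x x0). Qed.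

Lemma vecx_diff A (x : pt) : differentiable (fun y : pt => @vecx R m y A) x.
Proof.
have -> : (fun y : pt => vecx y A) = (fun y => \sum_(j < m) y 0 j * clvec1 R j A).
  by apply/funext => y; rewrite /vecx sum_ffunE; apply: eq_bigr => j _; rewrite ffunE.
apply: diff_big => j.
have -> : (fun y : pt => y 0 j * clvec1 R j A) = (fun y : pt => y 0 j) * (cst (clvec1 R j A)) by [].
apply: differentiableM; first exact: coord_diff.
exact: differentiable_cst.
Qed.

Lemma clmul_diff (a b : CF) (x : pt) :
  (forall A, differentiable (fun y => a y A) x) ->
  (forall B, differentiable (fun y => b y B) x) ->
  forall C, differentiable (fun y => clmul (a y) (b y) C) x.
Proof.
move=> da db C.
have -> : (fun y => clmul (a y) (b y) C) = (fun y => \sum_(A : {set 'I_m}) \sum_(B : {set 'I_m} | (A :\: B) :|: (B :\: A) == C)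
              clsgn R A B * a y A * b y B).
  by apply/funext => y; rewrite ffunE.
apply: diff_big => A; apply: diff_big => B.
have -> : (fun y => clsgn R A B * a y A * b y B) = ((cst (clsgn R A B)) * (fun y => a y A)) * (fun y => b y B) by [].
apply: differentiableM => //; apply: differentiableM => //.
Qed.


Lemma radV_derive (x : pt) (j : 'I_m) : x != 0 ->
  derivable (fun y : pt => (Defs.rad y)^-1) x (ept R j) /\
  'D_(ept R j) (fun y : pt => (Defs.rad y)^-1) x = - (x 0 j * (Defs.rad x)^-3).
Proof.
move=> x0; have r0 := rad_neq0 x0.
have dr : derivable (@Defs.rad R m) x (ept R j) by apply: diff_derivable; exact: rad_diff.
split; first exact: derivableV.
rewrite deriveV // rad_derive // /GRing.scale /=.
by field.
Qed.

Lemma pd_claim (G : CF) (x : pt) (j : 'I_m) : x != 0 ->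
  (forall A, differentiable (fun y => G y A) x) ->
  pdC j (fun y => - ((Defs.rad y)^-1 *: G y)) x =
    - (Defs.rad x)^-1 *: pdC j G x + (x 0 j * (Defs.rad x)^-3) *: G x.
Proof.
move=> x0 dG; apply/ffunP => A; rewrite !ffunE.
have -> : (fun y => (- ((Defs.rad y)^-1 *: G y)) A) =
    - ((fun y => (Defs.rad y)^-1) * (fun y => G y A)).
  by apply/funext => y; rewrite 2!ffunE.
have [dri Dri] := radV_derive j x0.
have dGj : derivable (fun y => G y A) x (ept R j) by exact: diff_derivable.
rewrite deriveN; last exact: derivableM.
rewrite deriveM // Dri /GRing.scale /=; ring.
Qed.

Lemma sdirac_eq (F : CF) (x : pt) : smooth F -> x != 0 ->
  sdirac F x = (Ssq x)^-1 *: ( - clmul (vecx x) (Defs.dirac (fun y => clmul (vecx y) (F y)) x)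
     + (Ssq x)^-1 *: clmul (vecx x) (clmul (vecx x) (clmul (vecx x) (F x)))).
Proof.
move=> sF x0; have r0 := rad_neq0 x0.
set G := fun y => clmul (vecx y) (F y).
have dG : forall A, differentiable (fun y => G y A) x.
  apply: clmul_diff => A; [exact: vecx_diff | exact: smooth_diff].
have eH : (fun y => - clmul (omega y) (F y)) = (fun y => - ((Defs.rad y)^-1 *: G y)).
  by apply/funext => y; rewrite /omega clmulZl.
rewrite /sdirac eH /Defs.dirac.
under eq_bigr do rewrite (pd_claim _ x0 dG) clmulDr !clmulZr.
rewrite big_split /= -!scaler_sumr.
have -> : \sum_(i < m) (x 0 i * (Defs.rad x)^-3) *: clmul (clvec1 R i) (G x)
    = (Defs.rad x)^-3 *: clmul (vecx x) (G x).
  rewrite /vecx clmul_suml scaler_sumr; apply: eq_bigr => i _.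
  by rewrite clmulZl scalerA mulrC.
rewrite /omega clmulZl clmulDr !clmulZr !scalerDr !scalerA.
have eS : Ssq x = Defs.rad x ^+ 2 by rewrite rad_sqr.
rewrite eS scalerN -scaleNr.
by congr (_ *: _ + _ *: _); field.
Qed.

End SD.

Section OB.
Variables (R : realType) (m : nat).
Local Notation Cl := (Cl R m).
Local Notation pt := 'rV[R]_m.
Local Notation CF := (CF R m).

Lemma pt_decomp (x : pt) : x = \sum_(j < m) x 0 j *: ept R j.
Proof.
apply/matrixP => i k; rewrite summxE (ord1 i).
rewrite (bigD1 k) //= big1 ?addr0.
  by rewrite !mxE eqxx mulr1.
by move=> j jk; rewrite !mxE eq_sym (negbTE jk) mulr0.
Qed.

Lemma derive_omega (f : pt -> R) (x : pt) : differentiable f x ->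
  'D_(omegapt x) f x = (Defs.rad x)^-1 * \sum_(j < m) x 0 j * 'D_(ept R j) f x.
Proof.
move=> df; rewrite deriveE // /omegapt.
have -> : (Defs.rad x)^-1 *: x = (Defs.rad x)^-1 *: \sum_(j < m) x 0 j *: ept R j.
  by rewrite -pt_decomp.
rewrite linearZ linear_sum /=.
rewrite /GRing.scale /=; congr (_ * _); apply: eq_bigr => j _.
by rewrite linearZ deriveE.
Qed.

Lemma opB_eq (F : CF) (x : pt) : smooth F -> x != 0 ->
  opB F x = - Defs.dirac F x + (Ssq x)^-1 *:
     (clmul (vecx x) (\sum_(j < m) x 0 j *: pdC j F x) + (m.-1)%:R *: clmul (vecx x) (F x)).
Proof.
move=> sF x0; have r0 := rad_neq0 x0.
have pdrE : pdr F x = (Defs.rad x)^-1 *: \sum_(j < m) x 0 j *: pdC j F x.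
  apply/ffunP => A; rewrite ffunE [RHS]ffunE sum_ffunE derive_omega; last exact: smooth_diff.
  congr (_ * _); apply: eq_bigr => j _; by rewrite !ffunE.
rewrite /opB /angdirac pdrE /omega !clmulZl !clmulZr.
have eS : Ssq x = Defs.rad x ^+ 2 by rewrite rad_sqr.
rewrite eS !scalerA scalerBr !scalerA mulVf // scale1r.
have c1 : 1 * ((Defs.rad x)^-1 / Defs.rad x) = Defs.rad x ^- 2 by field.
have c2 : (m.-1)%:R / Defs.rad x / Defs.rad x = Defs.rad x ^- 2 * (m.-1)%:R by field.
by rewrite c1 c2 opprB scalerDr scalerA [X in X + _]addrC -addrA.
Qed.

End OB.

Theorem proposition3 (R : realType) (m : nat) (hm : (2 <= m)%N) :
  is_cartesian (@sdirac R m) /\ is_cartesian (@opB R m).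
Proof.
have SV := @cart_scal_inv R m _ (@polyfun_S R m) (@Ssq_neq0 R m).
have VX := @cart_vecx R m.
split.
  eexists; split; last first.
    by move=> F sF x x0; exact: sdirac_eq.
  apply: (cart_ext (cart_comp SV (cart_add
      (cart_comp (@cart_scal_const R m (-1)) (cart_comp VX (cart_comp (@cart_dirac R m) VX)))
      (cart_comp SV (cart_comp VX (cart_comp VX VX)))))).
  by move=> F x /=; rewrite scaleN1r.
eexists; split; last first.
  by move=> F sF x x0; exact: opB_eq.
apply: (cart_ext (cart_add (cart_comp (@cart_scal_const R m (-1)) (@cart_dirac R m))
   (cart_comp SV (cart_add (cart_comp VX (@cart_euler R m))
       (cart_comp (@cart_scal_const R m (m.-1)%:R) VX))))).
by move=> F x /=; rewrite scaleN1r.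
Qed.
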